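(* Let $\lambda>0$, let $a\in C^1(\mathbb{R}^+)$ be non-decreasing and globally Lipschitz with $0<m\le a(s)\le M$ for all $s\ge 0$, and let $f\in C^2(\mathbb{R})$ be odd with $f(0)=0$, $f'(0)=1$, $sf''(s)<0$ for $s\neq 0$, and $\limsup_{|s|\to\infty} f(s)/s\le 0$. Consider the problem $$u_t=a(\|u_x\|^2)u_{xx}+\lambda f(u),\ x\in(0,\pi),\ t>0;\quad u(t,0)=u(t,\pi)=0;\quad u(0,\cdot)=u_0\in H^1_0(0,\pi),$$ and let $\{S(t):t\ge0\}$ be the associated semigroup on $H^1_0(0,\pi)$, with global attractor $\mathcal{A}$. Then the semigroup restricted to $\mathcal{A}$ is injective. In other words, if $u:\mathbb{R}\to H^1_0(0,\pi)$ and $v:\mathbb{R}\to H^1_0(0,\pi)$ are global solutions of this problem with $u(\mathbb{R})\cap v(\mathbb{R})\neq\emptyset$, then $u(\mathbb{R})=v(\mathbb{R})$.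
   Context: $\|\cdot\|$ denotes the norm of $L^2(0,\pi)$. A global solution is a map $\xi:\mathbb{R}\to H^1_0(0,\pi)$ with $S(t)\xi(s)=\xi(t+s)$ for all $t\ge0$, $s\in\mathbb{R}$. The global attractor is the compact invariant set attracting bounded sets; it consists of the values $\xi(0)$ of bounded global solutions. *)

(* Defs.v *)
From Stdlib Require Import Reals.
From Coquelicot Require Import Coquelicot.
Open Scope R_scope.

Definition C1_nonneg (a : R -> R) : Prop :=
  exists da : R -> R,
    (forall s, 0 < s -> is_derive a s (da s)) /\
    (forall s, 0 <= s -> forall eps, 0 < eps -> exists delta, 0 < delta /\
        forall r, 0 <= r -> Rabs (r - s) < delta ->
          Rabs (a r - a s) < eps /\ Rabs (da r - da s) < eps).

Definition nondecreasing_nonneg (a : R -> R) : Prop :=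
  forall s r, 0 <= s -> s <= r -> a s <= a r.

Definition lipschitz_nonneg (a : R -> R) : Prop :=
  exists L, 0 <= L /\ forall s r, 0 <= s -> 0 <= r -> Rabs (a s - a r) <= L * Rabs (s - r).

Definition hyp_a (a : R -> R) (m M : R) : Prop :=
  C1_nonneg a /\ nondecreasing_nonneg a /\ lipschitz_nonneg a /\
  0 < m /\ (forall s, 0 <= s -> m <= a s /\ a s <= M).

Definition C2 (f : R -> R) : Prop :=
  (forall x, ex_derive f x) /\ (forall x, ex_derive (Derive f) x) /\
  (forall x, continuous (Derive_n f 2) x).

Definition limsup_ratio_nonpos (f : R -> R) : Prop :=
  forall eps, 0 < eps -> exists K, forall s, K < Rabs s -> f s / s <= eps.

Definition hyp_f (f : R -> R) : Prop :=
  C2 f /\ (forall s, f (- s) = - f s) /\ f 0 = 0 /\ Derive f 0 = 1 /\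
  (forall s, s <> 0 -> s * Derive_n f 2 s < 0) /\ limsup_ratio_nonpos f.

Definition jcont (g : R -> R -> R) : Prop :=
  forall t x, 0 <= x <= PI -> forall eps, 0 < eps -> exists delta, 0 < delta /\
    forall t' x', 0 <= x' <= PI -> Rabs (t' - t) < delta -> Rabs (x' - x) < delta ->
      Rabs (g t' x' - g t x) < eps.

Definition grad_norm2 (w : R -> R) : R := RInt (fun y => (Derive w y) ^ 2) 0 PI.

(* A global (classical) solution on the whole time line R of
     u_t = a(||u_x||^2) u_xx + lambda f(u),  x in (0,pi),
     u(t,0) = u(t,pi) = 0.
   u t is represented as a function on R; only its values on [0,pi] matter
   (it is required to be C^2 in x, so that u_x, u_xx make sense up to the
   boundary). *)
Definition global_solution (a f : R -> R) (lambda : R) (u : R -> R -> R) : Prop :=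
  (forall t x, ex_derive (u t) x /\ ex_derive (Derive (u t)) x) /\
  (forall t x, 0 <= x <= PI -> ex_derive (fun s => u s x) t) /\
  jcont u /\ jcont (fun t x => Derive (u t) x) /\
  jcont (fun t x => Derive_n (u t) 2 x) /\
  jcont (fun t x => Derive (fun s => u s x) t) /\
  (forall t, u t 0 = 0 /\ u t PI = 0) /\
  (forall t x, 0 < x < PI ->
     Derive (fun s => u s x) t
     = a (grad_norm2 (u t)) * Derive_n (u t) 2 x + lambda * f (u t x)).

(* equality of two states as elements of H^1_0(0,pi) (functions on [0,pi]) *)
Definition same_state (w z : R -> R) : Prop := forall x, 0 <= x <= PI -> w x = z x.

(* Main.v *)
Require Import Defs.
From Stdlib Require Import Reals Lra Psatz Classical.
From Coquelicot Require Import Coquelicot.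
Open Scope R_scope.

Definition cl (x : R) : R := Rmax 0 (Rmin PI x).

Lemma cl_in x : 0 <= cl x <= PI.
Proof. unfold cl, Rmax, Rmin; pose proof PI_RGT_0;
  repeat destruct Rle_dec; lra. Qed.

Lemma cl_id x : 0 <= x <= PI -> cl x = x.
Proof. unfold cl, Rmax, Rmin; repeat destruct Rle_dec; lra. Qed.

Lemma cl_lip x y : Rabs (cl x - cl y) <= Rabs (x - y).
Proof. unfold cl, Rmax, Rmin; pose proof PI_RGT_0;
  repeat destruct Rle_dec; unfold Rabs; repeat destruct Rcase_abs; lra. Qed.

Definition J (g : R -> R -> R) : Prop :=
  forall t x, continuity_2d_pt (fun s y => g s (cl y)) t x.

Definition cont01 (h : R -> R) : Prop := forall z, continuous (fun x => h (cl x)) z.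

Lemma jcont_J g : jcont g -> J g.
Proof.
  intros H t x eps.
  destruct (H t (cl x) (cl_in x) eps (cond_pos eps)) as [d [Hd Hd']].
  exists (mkposreal d Hd); simpl; intros u v Hu Hv.
  apply Hd'; auto using cl_in.
  eapply Rle_lt_trans; [apply cl_lip| exact Hv].
Qed.

Lemma cont_eps (k : R -> R) z :
  (forall eps, 0 < eps -> exists d, 0 < d /\ forall y, Rabs (y - z) < d -> Rabs (k y - k z) < eps) ->
  continuous k z.
Proof.
  intros H. apply continuity_pt_filterlim. apply continuity_pt_locally.
  intros eps. destruct (H eps (cond_pos eps)) as [d [Hd Hd']].
  exists (mkposreal d Hd); intros y Hy; apply Hd'; exact Hy.
Qed.

Lemma J_cont01 g t : J g -> cont01 (g t).
Proof.
  intros H z. apply cont_eps. intros eps He.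
  destruct (H t z (mkposreal eps He)) as [d Hd].
  exists d; split; [apply cond_pos|]. intros y Hy.
  apply (Hd t y); auto. rewrite Rminus_eq_0, Rabs_R0; apply cond_pos.
Qed.

Lemma cont01_ex_RInt h : cont01 h -> ex_RInt h 0 PI.
Proof.
  intros H. apply (ex_RInt_ext (fun x => h (cl x))).
  - intros x Hx. rewrite Rmin_left, Rmax_right in Hx by (pose proof PI_RGT_0; lra).
    rewrite cl_id; auto; lra.
  - apply (ex_RInt_continuous (V:=R_CompleteNormedModule)). intros; apply H.
Qed.

Lemma cont01_plus h k : cont01 h -> cont01 k -> cont01 (fun x => h x + k x).
Proof. intros H K z. apply (continuous_plus (fun x => h (cl x)) (fun x => k (cl x))); auto. Qed.
Lemma cont01_minus h k : cont01 h -> cont01 k -> cont01 (fun x => h x - k x).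
Proof. intros H K z. apply (continuous_minus (fun x => h (cl x)) (fun x => k (cl x))); auto. Qed.
Lemma cont01_mult h k : cont01 h -> cont01 k -> cont01 (fun x => h x * k x).
Proof. intros H K z. apply (continuous_mult (fun x => h (cl x)) (fun x => k (cl x))); auto. Qed.
Lemma cont01_const c : cont01 (fun _ => c).
Proof. intros z. apply continuous_const. Qed.
Lemma cont01_ext h k : (forall x, h x = k x) -> cont01 h -> cont01 k.
Proof. intros E H z. apply (continuous_ext (fun x => h (cl x))); auto. Qed.
Lemma cont01_pow2 h : cont01 h -> cont01 (fun x => h x ^ 2).
Proof. intros H. apply (cont01_ext (fun x => h x * h x)). intros; ring. now apply cont01_mult. Qed.
Lemma cont01_comp (f : R -> R) h : (forall y, continuous f y) -> cont01 h -> cont01 (fun x => f (h x)).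
Proof. intros F H z. apply (continuous_comp (fun x => h (cl x)) f); auto. Qed.

Lemma cont_pt_of k z : continuous k z -> continuity_pt k z.
Proof. intros H; now apply continuity_pt_filterlim. Qed.

Lemma cont01_bound h : cont01 h -> exists B, forall x, 0 <= x <= PI -> Rabs (h x) <= B.
Proof.
  intros H. pose proof PI_RGT_0.
  destruct (continuity_ab_maj (fun x => Rabs (h (cl x))) 0 PI) as [xm [Hm _]]; [lra| |].
  - intros c _. apply (continuity_pt_comp (fun x => h (cl x)) Rabs).
    + apply cont_pt_of, H.
    + apply Rcontinuity_abs.
  - exists (Rabs (h (cl xm))). intros x Hx. replace (h x) with (h (cl x)) by (rewrite cl_id; auto). apply Hm; auto.
Qed.

Lemma J_bound g T0 T1 : J g -> exists B, forall t x, T0 <= t <= T1 -> 0 <= x <= PI -> Rabs (g t x) <= B.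
Proof.
  intros H.
  destruct (uniform_continuity_2d (fun s y => g s (cl y)) T0 T1 0 PI) with (eps := mkposreal 1 Rlt_0_1)
    as [d Hd]. { intros; apply H. }
  simpl in Hd.
  assert (Hn : forall n : nat, exists B, forall t x, T0 <= t <= T1 -> t <= T0 + INR n * (d/2) ->
     0 <= x <= PI -> Rabs (g t x) <= B).
  { induction n as [|n [B IH]].
    - destruct (cont01_bound (g T0) (J_cont01 g T0 H)) as [B HB].
      exists B. intros t x Ht Ht' Hx. simpl in Ht'. replace t with T0 by lra. auto.
    - destruct (Rle_lt_dec (T0 + INR n * (d/2)) T1) as [Hle|Hlt].
      + set (ts := T0 + INR n * (d / 2)).
        assert (Hts : T0 <= ts). { unfold ts. pose proof (pos_INR n); pose proof (cond_pos d); nra. }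
        destruct (cont01_bound (g ts) (J_cont01 g ts H)) as [B2 HB2].
        exists (Rmax B (B2 + 1)). intros t x Ht Ht' Hx.
        destruct (Rle_lt_dec t ts) as [H1|H1].
        * eapply Rle_trans; [apply IH; auto| apply Rmax_l].
        * eapply Rle_trans; [|apply Rmax_r].
          rewrite S_INR in Ht'. pose proof (cond_pos d).
          assert (E : Rabs (g t (cl x) - g ts (cl x)) < 1).
          { apply Hd; [lra|exact Hx|lra|exact Hx| |].
            - rewrite Rabs_right by lra. unfold ts in *. lra.
            - rewrite Rminus_eq_0, Rabs_R0; apply cond_pos. }
          rewrite cl_id in E by auto. specialize (HB2 x Hx).
          revert E HB2. unfold Rabs; repeat destruct Rcase_abs; lra.
      + exists B. intros t x Ht Ht' Hx. apply IH; auto. lra.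
  }
  destruct (INR_unbounded ((T1 - T0) / (d/2))) as [n Hn'].
  destruct (Hn n) as [B HB]. exists B. intros t x Ht Hx. apply HB; auto.
  pose proof (cond_pos d).
  assert (T1 - T0 < INR n * (d/2)); [|lra].
  apply Rmult_gt_compat_r with (r := d/2) in Hn'; [|lra].
  replace ((T1 - T0) / (d / 2) * (d / 2)) with (T1 - T0) in Hn' by (field; lra). lra.
Qed.

Lemma J_plus g h : J g -> J h -> J (fun t x => g t x + h t x).
Proof. intros G H t x. apply (continuity_2d_pt_plus (fun s y => g s (cl y)) (fun s y => h s (cl y))); auto. Qed.
Lemma J_minus g h : J g -> J h -> J (fun t x => g t x - h t x).
Proof. intros G H t x. apply (continuity_2d_pt_minus (fun s y => g s (cl y)) (fun s y => h s (cl y))); auto. Qed.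
Lemma J_mult g h : J g -> J h -> J (fun t x => g t x * h t x).
Proof. intros G H t x. apply (continuity_2d_pt_mult (fun s y => g s (cl y)) (fun s y => h s (cl y))); auto. Qed.
Lemma J_ext g h : (forall t x, g t x = h t x) -> J g -> J h.
Proof. intros E G t x. apply (continuity_2d_pt_ext (fun s y => g s (cl y))); auto. Qed.
Lemma J_const_time h : cont01 h -> J (fun _ x => h x).
Proof.
  intros H t x. apply (continuity_1d_2d_pt_comp (fun y => h (cl y)) (fun _ v => v)).
  - apply cont_pt_of, H.
  - apply continuity_2d_pt_id2.
Qed.
Lemma J_const c : J (fun _ _ => c).
Proof. intros t x. apply continuity_2d_pt_const. Qed.
Lemma J_comp (f : R -> R) g : (forall y, continuous f y) -> J g -> J (fun t x => f (g t x)).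
Proof.
  intros F G t x. apply (continuity_1d_2d_pt_comp f (fun s y => g s (cl y))); auto.
  apply cont_pt_of, F.
Qed.

Lemma J_UX g t0 : J g -> forall eps, 0 < eps -> exists d, 0 < d /\
  forall t x, Rabs (t - t0) < d -> 0 <= x <= PI -> Rabs (g t x - g t0 x) < eps.
Proof.
  intros G eps He.
  destruct (uniform_continuity_2d_1d' (fun s y => g s (cl y)) 0 PI t0) with (eps := mkposreal eps He)
    as [d Hd]. { intros; apply G. }
  exists d; split; [apply cond_pos|]. intros t x Ht Hx.
  simpl in Hd. pose proof (Hd x t0 x t Hx) as K. rewrite cl_id in K by auto.
  apply K; auto.
  - pose proof (cond_pos d); lra.
  - revert Ht; unfold Rabs; destruct Rcase_abs; lra.
  - rewrite Rminus_eq_0, Rabs_R0; apply cond_pos.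
Qed.

Lemma deriv_RInt (F dF : R -> R -> R) t0 : J F -> J dF ->
  (forall s x, 0 <= x <= PI -> is_derive (fun s => F s x) s (dF s x)) ->
  is_derive (fun s => RInt (F s) 0 PI) t0 (RInt (dF t0) 0 PI).
Proof.
  intros HF HdF HD. pose proof PI_RGT_0.
  assert (E1 : forall s, RInt (F s) 0 PI = RInt (fun y => F s (cl y)) 0 PI).
  { intros s. apply RInt_ext. intros x Hx. rewrite Rmin_left, Rmax_right in Hx by lra.
    rewrite cl_id; auto; lra. }
  assert (Dd : forall s y, Derive (fun u => F u (cl y)) s = dF s (cl y)).
  { intros s y. apply is_derive_unique. apply HD, cl_in. }
  assert (E2 : RInt (dF t0) 0 PI = RInt (fun y => Derive (fun u => F u (cl y)) t0) 0 PI).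
  { apply RInt_ext. intros x Hx. rewrite Rmin_left, Rmax_right in Hx by lra.
    rewrite Dd, cl_id; auto; lra. }
  rewrite E2.
  apply (is_derive_ext (fun s => RInt (fun y => F s (cl y)) 0 PI)).
  { intros s; now rewrite E1. }
  apply (is_derive_RInt_param (fun s y => F s (cl y))).
  - apply filter_forall. intros s y _. eexists. apply HD, cl_in.
  - intros y _. apply (continuity_2d_pt_ext (fun s v => dF s (cl v))).
    + intros; now rewrite Dd.
    + apply HdF.
  - apply filter_forall. intros s. apply (ex_RInt_continuous (V:=R_CompleteNormedModule)).
    intros z _. apply (J_cont01 F s HF z).
Qed.

Lemma RInt_add (f g : R -> R) a b : ex_RInt f a b -> ex_RInt g a b ->
  RInt (fun x => f x + g x) a b = RInt f a b + RInt g a b.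
Proof. intros. apply (RInt_plus (V:=R_CompleteNormedModule)); auto. Qed.
Lemma RInt_sub (f g : R -> R) a b : ex_RInt f a b -> ex_RInt g a b ->
  RInt (fun x => f x - g x) a b = RInt f a b - RInt g a b.
Proof. intros. apply (RInt_minus (V:=R_CompleteNormedModule)); auto. Qed.
Lemma RInt_scl (f : R -> R) c a b : ex_RInt f a b ->
  RInt (fun x => c * f x) a b = c * RInt f a b.
Proof. intros. apply (RInt_scal (V:=R_CompleteNormedModule)); auto. Qed.

Lemma is_derive_cont (f : R -> R) x l : is_derive f x l -> continuity_pt f x.
Proof. intros H. apply is_derive_Reals in H. apply derivable_continuous_pt. exists l; exact H. Qed.

Lemma ftc0 (F h : R -> R) : (forall x, 0 < x < PI -> is_derive F x (h x)) ->
  (forall x, 0 <= x <= PI -> continuity_pt F x) -> cont01 h ->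
  RInt h 0 PI = F PI - F 0.
Proof.
  intros HD HC Hh. pose proof PI_RGT_0.
  set (hc := fun y => h (cl y)).
  assert (Ex : forall a b, ex_RInt hc a b).
  { intros a b. apply (ex_RInt_continuous (V:=R_CompleteNormedModule)). intros; apply Hh. }
  set (G := fun x => RInt hc 0 x).
  assert (DG : forall x, is_derive G x (hc x)).
  { intros x. apply (is_derive_RInt (V:=R_CompleteNormedModule) hc G 0 x).
    - apply filter_forall. intros b. apply (RInt_correct (V:=R_CompleteNormedModule)), Ex.
    - apply Hh. }
  destruct (MVT_gen (fun x => F x - G x) 0 PI (fun _ => 0)) as [c [_ Hc]].
  - intros x Hx. rewrite Rmin_left, Rmax_right in Hx by lra.
    replace 0 with (h x - hc x) at 1 by (unfold hc; rewrite cl_id; lra).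
    apply (is_derive_minus F G); auto.
  - intros x Hx. rewrite Rmin_left, Rmax_right in Hx by lra.
    apply continuity_pt_minus; auto. eapply is_derive_cont; apply DG.
  - assert (G PI = RInt h 0 PI).
    { unfold G. apply RInt_ext. intros x Hx. rewrite Rmin_left, Rmax_right in Hx by lra.
      unfold hc; rewrite cl_id; auto; lra. }
    assert (G 0 = 0). { unfold G. apply (RInt_point (V:=R_CompleteNormedModule)). }
    lra.
Qed.

Lemma ibp (phi dphi dpsi ddpsi : R -> R) :
  (forall x, is_derive phi x (dphi x)) -> (forall x, is_derive dpsi x (ddpsi x)) ->
  cont01 phi -> cont01 dphi -> cont01 dpsi -> cont01 ddpsi ->
  phi 0 = 0 -> phi PI = 0 ->
  RInt (fun x => dphi x * dpsi x) 0 PI = - RInt (fun x => phi x * ddpsi x) 0 PI.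
Proof.
  intros D1 D2 C1 C2 C3 C4 E0 EP.
  assert (H : RInt (fun x => dphi x * dpsi x + phi x * ddpsi x) 0 PI = phi PI * dpsi PI - phi 0 * dpsi 0).
  { apply (ftc0 (fun x => phi x * dpsi x)).
    + intros x _. apply (is_derive_mult phi dpsi); auto. intros; apply Rmult_comm.
    + intros x _. apply continuity_pt_mult; eapply is_derive_cont; eauto.
    + apply cont01_plus; apply cont01_mult; auto. }
  rewrite RInt_add in H.
  - rewrite E0, EP in H. lra.
  - apply cont01_ex_RInt, cont01_mult; auto.
  - apply cont01_ex_RInt, cont01_mult; auto.
Qed.

Lemma prod_close a b a0 b0 e B1 B2 : Rabs (a - a0) < e -> Rabs (b - b0) < e ->
  Rabs a0 <= B1 -> Rabs b0 <= B2 -> e <= 1 ->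
  Rabs (a * b - a0 * b0) <= e * (B1 + B2 + 1).
Proof.
  intros H1 H2 H3 H4 H5.
  replace (a * b - a0 * b0) with ((a - a0) * b + a0 * (b - b0)) by ring.
  eapply Rle_trans; [apply Rabs_triang|]. rewrite !Rabs_mult.
  assert (Rabs b <= B2 + 1).
  { replace b with ((b - b0) + b0) by ring. eapply Rle_trans; [apply Rabs_triang|]. lra. }
  pose proof (Rabs_pos (a - a0)); pose proof (Rabs_pos a0); pose proof (Rabs_pos (b - b0)).
  pose proof (Rabs_pos b).
  assert (Rabs (a - a0) * Rabs b <= e * (B2 + 1)) by (apply Rmult_le_compat; lra).
  assert (Rabs a0 * Rabs (b - b0) <= B1 * e) by (apply Rmult_le_compat; lra).
  nra.
Qed.

Lemma cont_RInt2 (g h : R -> R -> R) t0 : J g -> J h ->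
  forall eps, 0 < eps -> exists d, 0 < d /\ forall s r, Rabs (s - t0) < d -> Rabs (r - t0) < d ->
   Rabs (RInt (fun x => g s x * h r x) 0 PI - RInt (fun x => g t0 x * h t0 x) 0 PI) < eps.
Proof.
  intros G H eps He. pose proof PI_RGT_0.
  destruct (cont01_bound (g t0) (J_cont01 g t0 G)) as [B1 HB1].
  destruct (cont01_bound (h t0) (J_cont01 h t0 H)) as [B2 HB2].
  assert (0 <= B1) by (specialize (HB1 0); pose proof (Rabs_pos (g t0 0)); lra).
  assert (0 <= B2) by (specialize (HB2 0); pose proof (Rabs_pos (h t0 0)); lra).
  set (e := Rmin 1 (eps / (PI * (B1 + B2 + 2)))).
  assert (He0 : 0 < e). { unfold e. apply Rmin_pos; [lra|]. apply Rdiv_lt_0_compat; [lra|]. nra. }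
  assert (He1 : e <= 1) by apply Rmin_l.
  assert (He2 : e <= eps / (PI * (B1 + B2 + 2))) by apply Rmin_r.
  destruct (J_UX g t0 G e He0) as [d1 [Hd1 K1]].
  destruct (J_UX h t0 H e He0) as [d2 [Hd2 K2]].
  exists (Rmin d1 d2); split; [apply Rmin_pos; lra|]. intros s r Hs Hr.
  assert (Hs' : Rabs (s - t0) < d1) by (pose proof (Rmin_l d1 d2); lra).
  assert (Hr' : Rabs (r - t0) < d2) by (pose proof (Rmin_r d1 d2); lra).
  rewrite <- RInt_sub.
  2,3: apply cont01_ex_RInt, cont01_mult; apply J_cont01; auto.
  eapply Rle_lt_trans.
  - apply (abs_RInt_le_const _ 0 PI (e * (B1 + B2 + 1))); [lra| |].
    + apply cont01_ex_RInt, cont01_minus; apply cont01_mult; apply J_cont01; auto.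
    + intros x Hx. apply prod_close; auto.
  - replace (PI - 0) with PI by ring.
    assert (e * (PI * (B1 + B2 + 2)) <= eps).
    { apply Rmult_le_compat_r with (r := PI * (B1 + B2 + 2)) in He2; [|nra].
      replace (eps / (PI * (B1 + B2 + 2)) * (PI * (B1 + B2 + 2))) with eps in He2 by (field; nra).
      lra. }
    nra.
Qed.

Lemma minmax_close a h c : Rmin a (a + h) <= c <= Rmax a (a + h) -> Rabs (c - a) <= Rabs h.
Proof. unfold Rmin, Rmax; repeat destruct Rle_dec; unfold Rabs; repeat destruct Rcase_abs; lra. Qed.

Lemma derivP (W Wx Wxx Wt : R -> R -> R) t0 :
  J W -> J Wx -> J Wxx -> J Wt ->
  (forall t x, is_derive (W t) x (Wx t x)) ->
  (forall t x, is_derive (Wx t) x (Wxx t x)) ->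
  (forall t x, 0 <= x <= PI -> is_derive (fun s => W s x) t (Wt t x)) ->
  (forall t, W t 0 = 0 /\ W t PI = 0) ->
  is_derive (fun t => RInt (fun x => Wx t x ^ 2) 0 PI) t0
    (-2 * RInt (fun x => Wt t0 x * Wxx t0 x) 0 PI).
Proof.
  intros JW JWx JWxx JWt Dx Dxx Dt BC.
  set (B := fun s r => RInt (fun x => W s x * Wxx r x) 0 PI).
  set (D := fun s r => RInt (fun x => Wt s x * Wxx r x) 0 PI).
  assert (Phi : forall s r, RInt (fun x => Wx s x * Wx r x) 0 PI = - B s r).
  { intros s r. unfold B. apply ibp; auto; try apply J_cont01; auto; apply BC. }
  assert (Sym : forall s r, B s r = B r s).
  { intros s r. assert (- B s r = - B r s); [|lra].
    rewrite <- !Phi. apply RInt_ext. intros x _. apply Rmult_comm. }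
  assert (dB : forall r s, is_derive (fun s => B s r) s (D s r)).
  { intros r s. unfold B, D.
    apply (deriv_RInt (fun s x => W s x * Wxx r x) (fun s x => Wt s x * Wxx r x)).
    - apply J_mult; auto. apply J_const_time, J_cont01; auto.
    - apply J_mult; auto. apply J_const_time, J_cont01; auto.
    - intros s' x Hx. apply (is_derive_ext (fun s => Wxx r x * W s x)); [intros; apply Rmult_comm|].
      replace (Wt s' x * Wxx r x) with (Wxx r x * Wt s' x) by ring.
      apply is_derive_scal; auto. }
  assert (Main : is_derive (fun t => B t t) t0 (2 * D t0 t0)).
  { apply is_derive_Reals. intros eps He.
    destruct (cont_RInt2 Wt Wxx t0 JWt JWxx (eps/2)) as [d [Hd K]]; [lra|].
    exists (mkposreal d Hd). simpl. intros h Hh0 Hh.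
    destruct (MVT_gen (fun s => B s (t0 + h)) t0 (t0 + h) (fun s => D s (t0 + h))) as [c1 [Hc1 E1]].
    { intros; apply dB. } { intros; eapply is_derive_cont; apply dB. }
    destruct (MVT_gen (fun s => B s t0) t0 (t0 + h) (fun s => D s t0)) as [c2 [Hc2 E2]].
    { intros; apply dB. } { intros; eapply is_derive_cont; apply dB. }
    simpl in E1, E2. rewrite (Sym t0 (t0 + h)) in E1.
    replace ((B (t0 + h) (t0 + h) - B t0 t0) / h) with (D c1 (t0 + h) + D c2 t0).
    2: { replace (t0 + h - t0) with h in E1, E2 by ring. field_simplify_eq; auto. lra. }
    apply minmax_close in Hc1. apply minmax_close in Hc2.
    assert (A1 : Rabs (D c1 (t0 + h) - D t0 t0) < eps / 2).
    { apply K; try lra. replace (t0 + h - t0) with h by ring. exact Hh. }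
    assert (A2 : Rabs (D c2 t0 - D t0 t0) < eps / 2).
    { apply K; try lra. rewrite Rminus_eq_0, Rabs_R0; lra. }
    revert A1 A2. unfold D. unfold Rabs; repeat destruct Rcase_abs; lra. }
  apply (is_derive_ext (fun t => -1 * B t t)).
  { intros t. simpl. replace (-1 * B t t) with (- B t t) by ring. rewrite <- (Phi t t).
    apply RInt_ext; intros x _. simpl. ring. }
  replace (-2 * RInt (fun x => Wt t0 x * Wxx t0 x) 0 PI) with (-1 * (2 * D t0 t0)) by (unfold D; ring).
  apply is_derive_scal, Main.
Qed.

Lemma derivN (W Wt : R -> R -> R) t0 : J W -> J Wt ->
  (forall t x, 0 <= x <= PI -> is_derive (fun s => W s x) t (Wt t x)) ->
  is_derive (fun t => RInt (fun x => W t x ^ 2) 0 PI) t0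
    (2 * RInt (fun x => Wt t0 x * W t0 x) 0 PI).
Proof.
  intros JW JWt Dt. rewrite <- RInt_scl.
  2: apply cont01_ex_RInt, cont01_mult; apply J_cont01; auto.
  apply (deriv_RInt (fun s x => W s x ^ 2) (fun s x => 2 * (Wt s x * W s x))).
  - apply (J_ext (fun s x => W s x * W s x)); [intros; ring|]. apply J_mult; auto.
  - apply J_mult; [apply J_const|]. apply J_mult; auto.
  - intros s x Hx. apply (is_derive_ext (fun s => W s x * W s x)); [intros; simpl; ring|].
    replace (2 * (Wt s x * W s x)) with (plus (mult (Wt s x) (W s x)) (mult (W s x) (Wt s x)))
      by (unfold plus, mult; simpl; ring).
    apply (is_derive_mult (fun s => W s x) (fun s => W s x)); auto.
    intros; apply Rmult_comm.
Qed.

Lemma mono_le (F dF : R -> R) a b : a <= b ->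
  (forall t, a <= t <= b -> is_derive F t (dF t)) -> (forall t, a <= t <= b -> dF t <= 0) ->
  F b <= F a.
Proof.
  intros Hab HD Hd.
  destruct (MVT_gen F a b dF) as [c [Hc E]].
  - intros x Hx. rewrite Rmin_left, Rmax_right in Hx by lra. apply HD; lra.
  - intros x Hx. rewrite Rmin_left, Rmax_right in Hx by lra. eapply is_derive_cont, HD; lra.
  - rewrite Rmin_left, Rmax_right in Hc by lra. specialize (Hd c Hc). nra.
Qed.

Lemma gronwall_up (F dF : R -> R) k a b : a <= b ->
  (forall t, a <= t <= b -> is_derive F t (dF t)) -> (forall t, a <= t <= b -> dF t <= k * F t) ->
  F b <= F a * exp (k * (b - a)).
Proof.
  intros Hab HD Hd.
  assert (H := mono_le (fun t => F t * exp (- k * t)) (fun t => (dF t - k * F t) * exp (- k * t)) a b Hab).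
  assert (F b * exp (- k * b) <= F a * exp (- k * a)).
  { apply H.
    - intros t Ht. apply is_derive_Reals.
      replace ((dF t - k * F t) * exp (- k * t)) with (dF t * exp (- k * t) + F t * ((- k) * exp (- k * t))) by ring.
      apply (derivable_pt_lim_mult F (fun t => exp (- k * t))).
      + apply is_derive_Reals, HD; auto.
      + assert (H1 : derivable_pt_lim (fun t => - k * t) t (- k * 1)).
        { apply derivable_pt_lim_scal, derivable_pt_lim_id. }
        assert (H2 := derivable_pt_lim_comp (fun t => - k * t) exp t (- k * 1) (exp (- k * t)) H1
                        (derivable_pt_lim_exp _)).
        unfold comp in H2. replace (-k * exp (- k * t)) with (exp (- k * t) * (- k * 1)) by ring.
        exact H2.
    - intros t Ht. specialize (Hd t Ht). pose proof (exp_pos (- k * t)). nra. }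
  apply Rmult_le_compat_r with (r := exp (k * b)) in H0; [|left; apply exp_pos].
  rewrite Rmult_assoc, <- exp_plus in H0. replace (- k * b + k * b) with 0 in H0 by ring.
  rewrite exp_0, Rmult_1_r, Rmult_assoc, <- exp_plus in H0.
  replace (- k * a + k * b) with (k * (b - a)) in H0 by ring. exact H0.
Qed.

Lemma gronwall_down (F dF : R -> R) k a b : a <= b ->
  (forall t, a <= t <= b -> is_derive F t (dF t)) -> (forall t, a <= t <= b -> - k * F t <= dF t) ->
  F a * exp (- k * (b - a)) <= F b.
Proof.
  intros Hab HD Hd.
  assert (H := gronwall_up (fun t => - F t) (fun t => - dF t) (- k) a b Hab).
  assert (- F b <= - F a * exp (- k * (b - a))); [|lra].
  apply H.
  - intros t Ht. apply (is_derive_opp F). auto.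
  - intros t Ht. specialize (Hd t Ht). lra.
Qed.

Lemma cont_pt_eps (f : R -> R) x : continuity_pt f x ->
  forall eps, 0 < eps -> exists d, 0 < d /\ forall y, Rabs (y - x) < d -> Rabs (f y - f x) < eps.
Proof.
  intros H eps He. destruct (H eps He) as [d [Hd K]]. exists d; split; auto.
  intros y Hy. destruct (Req_dec y x) as [->|Hne].
  - rewrite Rminus_eq_0, Rabs_R0; auto.
  - apply K. split; [split; [exact I| auto]|]. exact Hy.
Qed.

Lemma fwd_abs (N X P Gi al : R -> R) (m C1 C2 T0 T1 : R) :
  0 < m -> T0 <= T1 -> 0 <= C1 ->
  (forall t, is_derive N t (2 * X t)) ->
  (forall t, T0 <= t <= T1 -> 0 <= N t /\ 0 <= P t /\ m <= al t /\
     Gi t <= C1 * P t + C2 * N t /\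
     forall k, 0 < k -> 2 * X t <= -2 * al t * P t + k * N t + Gi t / k) ->
  N T0 = 0 -> N T1 = 0.
Proof.
  intros Hm HT HC1 HD H H0.
  set (k := C1 / (2 * m) + 1).
  assert (Hk : 0 < k). { unfold k. assert (0 <= C1 / (2 * m)) by (apply Rdiv_le_0_compat; lra). lra. }
  assert (Hk2 : C1 / k <= 2 * m).
  { apply Rmult_le_reg_r with k; auto. unfold Rdiv. rewrite Rmult_assoc, Rinv_l by lra.
    unfold k. field_simplify; [|lra]. assert (0 <= C1 / (2 * m)) by (apply Rdiv_le_0_compat; lra). lra. }
  assert (Hup := gronwall_up N (fun t => 2 * X t) (k + C2 / k) T0 T1 HT).
  assert (N T1 <= 0).
  { rewrite H0, Rmult_0_l in Hup. apply Hup.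
    - intros; apply HD.
    - intros t Ht. destruct (H t Ht) as [HN [HP [Ha [HG HX]]]].
      specialize (HX k Hk).
      assert (Gi t / k <= C1 / k * P t + C2 / k * N t).
      { unfold Rdiv. replace (C1 * / k * P t + C2 * / k * N t) with ((C1 * P t + C2 * N t) * / k) by ring.
        apply Rmult_le_compat_r; [left; apply Rinv_0_lt_compat; lra| lra]. }
      assert (C1 / k * P t <= 2 * al t * P t).
      { apply Rmult_le_compat_r; lra. }
      nra. }
  destruct (H T1 ltac:(lra)) as [HN _]. lra.
Qed.

Lemma lam_step (n p x y g al m C1 C2 : R) :
  0 < n -> 0 <= p -> 0 < m -> m <= al -> 0 <= g -> 0 <= C1 -> 0 <= C2 ->
  g <= C1 * p + C2 * n -> 0 <= y + (p / n) * x + g / (4 * al) ->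
  (-2 * y * n - p * (2 * x)) / n ^ 2 <= (C1 / (2 * m) + 1) * (p / n + (C2 / (2 * m)) / (C1 / (2 * m) + 1)).
Proof.
  intros Hn Hp Hm Ha Hg HC1 HC2 HG HY.
  set (L := p / n).
  assert (HL : 0 <= L) by (apply Rdiv_le_0_compat; lra).
  assert (E : (-2 * y * n - p * (2 * x)) / n ^ 2 = -2 * (y + L * x) / n) by (unfold L; field; lra).
  rewrite E.
  assert (E2 : (C1 / (2 * m) + 1) * (L + C2 / (2 * m) / (C1 / (2 * m) + 1)) =
     C1 / (2 * m) * L + L + C2 / (2 * m)).
  { field. split; lra. }
  rewrite E2.
  assert (S1 : -2 * (y + L * x) / n <= g / (2 * al) / n).
  { unfold Rdiv. apply Rmult_le_compat_r; [left; apply Rinv_0_lt_compat; lra|].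
    assert (2 * (g / (4 * al)) = g / (2 * al)) by (field; lra).
    assert (HY' : 0 <= y + L * x + g / (4 * al)) by exact HY.
    unfold Rdiv in H, HY' |- *. lra. }
  assert (S2 : g / (2 * al) / n <= (C1 * p + C2 * n) / (2 * m) / n).
  { unfold Rdiv. apply Rmult_le_compat_r; [left; apply Rinv_0_lt_compat; lra|].
    apply Rmult_le_compat; try lra.
    - left; apply Rinv_0_lt_compat; lra.
    - apply Rinv_le_contravar; lra. }
  assert (E3 : (C1 * p + C2 * n) / (2 * m) / n = C1 / (2 * m) * L + C2 / (2 * m)) by (unfold L; field; lra).
  lra.
Qed.

Lemma bwd_abs (N X P Y Gi al : R -> R) (m M C1 C2 T0 T1 : R) :
  0 < m -> T0 <= T1 -> 0 <= C1 -> 0 <= C2 ->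
  (forall t, is_derive N t (2 * X t)) -> (forall t, is_derive P t (-2 * Y t)) ->
  (forall t, T0 <= t <= T1 -> 0 <= N t /\ 0 <= P t /\ m <= al t /\ al t <= M /\ 0 <= Gi t /\
     Gi t <= C1 * P t + C2 * N t /\ -2 * al t * P t - N t - Gi t <= 2 * X t /\
     (0 < N t -> 0 <= Y t + (P t / N t) * X t + Gi t / (4 * al t))) ->
  N T1 = 0 -> N T0 = 0.
Proof.
  intros Hm HT HC1 HC2 DN DP H HN1.
  destruct (H T0 ltac:(lra)) as [HN0 _].
  destruct (Rle_lt_or_eq_dec 0 (N T0) HN0) as [Hpos|]; [exfalso|auto].
  set (a1 := C1 / (2 * m) + 1). set (b1 := C2 / (2 * m)).
  assert (Ha1 : 0 < a1). { unfold a1. assert (0 <= C1 / (2 * m)) by (apply Rdiv_le_0_compat; lra). lra. }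
  assert (Hb1 : 0 <= b1) by (apply Rdiv_le_0_compat; lra).
  set (Lm := (P T0 / N T0 + b1 / a1) * exp (a1 * (T1 - T0))).
  destruct (H T0 ltac:(lra)) as [_ [HP0 [HmM0 _]]].
  assert (HLm : 0 <= Lm).
  { unfold Lm. apply Rmult_le_pos; [|left; apply exp_pos].
    assert (0 <= P T0 / N T0) by (apply Rdiv_le_0_compat; lra).
    assert (0 <= b1 / a1) by (apply Rdiv_le_0_compat; lra). lra. }
  assert (HmM : m <= M) by (destruct (H T0 ltac:(lra)) as [_ [_ [? [? _]]]]; lra).
  set (K2 := (2 * M + C1) * Lm + 1 + C2).
  assert (HK2 : 0 <= K2) by (unfold K2; nra).
  set (c0 := N T0 * exp (- K2 * (T1 - T0))).
  assert (Hc0 : 0 < c0) by (unfold c0; apply Rmult_lt_0_compat; [lra| apply exp_pos]).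
  assert (Claim : forall t, T0 <= t <= T1 -> (forall s, T0 <= s <= t -> 0 < N s) -> c0 <= N t).
  { intros t Ht Hpos'.
    assert (Lam : forall s, T0 <= s <= t -> P s / N s <= Lm).
    { intros s Hs.
      assert (G := gronwall_up (fun s => P s / N s + b1 / a1)
          (fun s => (-2 * Y s * N s - P s * (2 * X s)) / N s ^ 2) a1 T0 s ltac:(lra)).
      assert (P s / N s + b1 / a1 <= (P T0 / N T0 + b1 / a1) * exp (a1 * (s - T0))).
      { apply G.
        - intros r Hr.
          assert (D1 : is_derive (fun s => P s / N s) r ((-2 * Y r * N r - P r * (2 * X r)) / N r ^ 2)).
          { apply is_derive_div; auto. assert (0 < N r) by (apply Hpos'; lra). lra. }
          apply is_derive_Reals. apply is_derive_Reals in D1.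
          replace ((-2 * Y r * N r - P r * (2 * X r)) / N r ^ 2) with
             ((-2 * Y r * N r - P r * (2 * X r)) / N r ^ 2 + 0) by ring.
          pose proof (derivable_pt_lim_plus _ _ r _ _ D1 (derivable_pt_lim_const (b1 / a1) r)) as Hp.
          unfold plus_fct, fct_cte in Hp. exact Hp.
        - intros r Hr. destruct (H r ltac:(lra)) as [A1 [A2 [A3 [A4 [A5 [A6 [A7 A8]]]]]]].
          assert (0 < N r) by (apply Hpos'; lra).
          unfold a1, b1. cbv beta. apply (lam_step _ _ _ _ (Gi r) (al r) m C1 C2); auto. }
      assert (exp (a1 * (s - T0)) <= exp (a1 * (T1 - T0))).
      { destruct (Req_dec (a1 * (s - T0)) (a1 * (T1 - T0))) as [E|E]; [rewrite E; lra|].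
        left; apply exp_increasing. apply Rmult_lt_compat_l; auto.
        assert (s - T0 <> T1 - T0) by (intro; apply E; rewrite H1; auto). lra. }
      assert (0 <= P T0 / N T0 + b1 / a1).
      { assert (0 <= P T0 / N T0) by (apply Rdiv_le_0_compat; lra).
        assert (0 <= b1 / a1) by (apply Rdiv_le_0_compat; lra). lra. }
      assert (0 <= b1 / a1) by (apply Rdiv_le_0_compat; lra).
      unfold Lm. nra. }
    assert (G := gronwall_down N (fun s => 2 * X s) K2 T0 t ltac:(lra)).
    assert (N T0 * exp (- K2 * (t - T0)) <= N t).
    { apply G; [intros; apply DN|].
      intros s Hs. destruct (H s ltac:(lra)) as [A1 [A2 [A3 [A4 [A5 [A6 [A7 A8]]]]]]].
      assert (HNs : 0 < N s) by (apply Hpos'; lra).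
      specialize (Lam s Hs).
      assert (EP : P s = (P s / N s) * N s) by (field; lra).
      assert (P s <= Lm * N s).
      { rewrite EP. apply Rmult_le_compat_r; lra. }
      unfold K2. nra. }
    assert (exp (- K2 * (T1 - T0)) <= exp (- K2 * (t - T0))).
    { destruct (Req_dec (- K2 * (T1 - T0)) (- K2 * (t - T0))) as [E|E]; [rewrite E; lra|].
      left; apply exp_increasing. nra. }
    unfold c0. nra. }
  set (S := fun t => T0 <= t <= T1 /\ forall s, T0 <= s <= t -> 0 < N s).
  assert (Sb : bound S). { exists T1. intros t [Ht _]. lra. }
  assert (Sn : exists t, S t). { exists T0. split; [lra|]. intros s Hs. replace s with T0 by lra. auto. }
  destruct (completeness S Sb Sn) as [Ts [Tub Tlub]].
  assert (HT0s : T0 <= Ts) by (apply Tub; destruct Sn as [t0 St0]; unfold S; split; [lra|]; intros s Hs; replace s with T0 by lra; auto).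
  assert (HTs1 : Ts <= T1) by (apply Tlub; intros t [Ht _]; lra).
  assert (below : forall r, r < Ts -> exists s, S s /\ r < s).
  { intros r Hr. apply NNPP. intros Hno.
    assert (Ts <= r); [|lra]. apply Tlub. intros s Ss. apply Rnot_lt_le. intros Hrs.
    apply Hno. exists s. auto. }
  assert (Ncont : forall t, continuity_pt N t) by (intros; eapply is_derive_cont; apply DN).
  assert (HNTs : c0 <= N Ts).
  { destruct (Req_dec Ts T0) as [E|E]. { rewrite E. unfold c0.
      assert (exp (- K2 * (T1 - T0)) <= 1). { rewrite <- exp_0. destruct (Req_dec (- K2 * (T1 - T0)) 0) as [E'|E']; [rewrite E'; lra|]. left; apply exp_increasing; nra. }
      nra. }
    apply Rnot_lt_le. intros Hlt.
    destruct (cont_pt_eps N Ts (Ncont Ts) (c0 - N Ts)) as [d [Hd Kd]]; [lra|].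
    destruct (below (Rmax T0 (Ts - d))) as [s [[Ss1 Ss2] Hs]].
    { unfold Rmax; destruct Rle_dec; lra. }
    assert (s <= Ts) by (apply Tub; split; auto).
    assert (c0 <= N s) by (apply Claim; auto).
    assert (Rabs (N s - N Ts) < c0 - N Ts).
    { apply Kd. unfold Rmax in Hs; destruct Rle_dec in Hs; unfold Rabs; destruct Rcase_abs; lra. }
    revert H2. unfold Rabs; destruct Rcase_abs; lra. }
  assert (STs : S Ts).
  { split; [lra|]. intros s Hs. destruct (Req_dec s Ts) as [->|E]; [lra|].
    destruct (below s) as [s' [[Hs'1 Hs'2] Hss']]; [lra|]. apply Hs'2; lra. }
  destruct (Req_dec Ts T1) as [E|E].
  - rewrite E in HNTs. lra.
  - destruct (cont_pt_eps N Ts (Ncont Ts) (N Ts)) as [d [Hd Kd]]; [lra|].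
    set (T' := Rmin T1 (Ts + d / 2)).
    assert (Ts < T') by (unfold T', Rmin; destruct Rle_dec; lra).
    assert (S T').
    { split; [unfold T', Rmin in *; destruct Rle_dec; lra|].
      intros s Hs. destruct (Rle_lt_dec s Ts) as [Hle|Hlt].
      - apply (proj2 STs); lra.
      - assert (Hab : Rabs (N s - N Ts) < N Ts).
        { apply Kd. unfold T', Rmin in Hs; destruct Rle_dec in Hs; unfold Rabs; destruct Rcase_abs; lra. }
        revert Hab. unfold Rabs; destruct Rcase_abs; lra. }
    assert (T' <= Ts) by (apply Tub; auto). lra.
Qed.

Definition uX (u : R -> R -> R) t x := Derive (u t) x.
Definition uXX (u : R -> R -> R) t x := Derive_n (u t) 2 x.
Definition uT (u : R -> R -> R) t x := Derive (fun s => u s x) t.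

Definition good (u : R -> R -> R) : Prop :=
  J u /\ J (uX u) /\ J (uXX u) /\ J (uT u) /\
  (forall t x, is_derive (u t) x (uX u t x)) /\
  (forall t x, is_derive (uX u t) x (uXX u t x)) /\
  (forall t x, 0 <= x <= PI -> is_derive (fun s => u s x) t (uT u t x)) /\
  (forall t, u t 0 = 0 /\ u t PI = 0).

Lemma sol_good a f lambda u : global_solution a f lambda u -> good u.
Proof.
  intros [H1 [H2 [H3 [H4 [H5 [H6 [H7 H8]]]]]]].
  split; [apply jcont_J, H3|]. split; [apply jcont_J, H4|].
  split; [apply jcont_J, H5|]. split; [apply jcont_J, H6|].
  split; [intros t x; apply (Derive_correct (u t) x), (proj1 (H1 t x))|].
  split; [intros t x; unfold uX, uXX; simpl; apply (Derive_correct (fun x => Derive (u t) x)), (proj2 (H1 t x))|].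
  split; [intros t x Hx; apply (Derive_correct (fun s => u s x)), (H2 t x Hx)|].
  exact H7.
Qed.

Definition Wf (u v : R -> R -> R) t x := u t x - v t x.
Definition Wxf u v t x := uX u t x - uX v t x.
Definition Wxxf u v t x := uXX u t x - uXX v t x.
Definition Wtf u v t x := uT u t x - uT v t x.

Lemma good_W u v : good u -> good v ->
  J (Wf u v) /\ J (Wxf u v) /\ J (Wxxf u v) /\ J (Wtf u v) /\
  (forall t x, is_derive (Wf u v t) x (Wxf u v t x)) /\
  (forall t x, is_derive (Wxf u v t) x (Wxxf u v t x)) /\
  (forall t x, 0 <= x <= PI -> is_derive (fun s => Wf u v s x) t (Wtf u v t x)) /\
  (forall t, Wf u v t 0 = 0 /\ Wf u v t PI = 0).
Proof.
  intros [A1 [A2 [A3 [A4 [A5 [A6 [A7 A8]]]]]]] [B1 [B2 [B3 [B4 [B5 [B6 [B7 B8]]]]]]].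
  split; [apply J_minus; auto|]. split; [apply J_minus; auto|].
  split; [apply J_minus; auto|]. split; [apply J_minus; auto|].
  split; [intros t x; apply (is_derive_minus (u t) (v t)); auto|].
  split; [intros t x; apply (is_derive_minus (uX u t) (uX v t)); auto|].
  split; [intros t x Hx; apply (is_derive_minus (fun s => u s x) (fun s => v s x)); auto|].
  intros t. unfold Wf. destruct (A8 t), (B8 t). split; lra.
Qed.

Ltac c01 := repeat match goal with
  | H : cont01 ?h |- cont01 ?h => exact H
  | H : cont01 ?h |- cont01 (fun x => ?h x) => exact H
  | H : J ?g |- cont01 (?g ?t) => exact (J_cont01 g t H)
  | H : J ?g |- cont01 (fun x => ?g ?t x) => exact (J_cont01 g t H)
  | |- cont01 (fun _ => ?c) => exact (cont01_const c)
  | |- cont01 (fun x => @?h x ^ 2) => apply (cont01_pow2 h)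
  | |- cont01 (fun x => @?h x + @?k x) => apply (cont01_plus h k)
  | |- cont01 (fun x => @?h x - @?k x) => apply (cont01_minus h k)
  | |- cont01 (fun x => @?h x * @?k x) => apply (cont01_mult h k)
  end.

Lemma RInt_lin (F G : R -> R) c : ex_RInt F 0 PI -> ex_RInt G 0 PI ->
  RInt (fun x => F x + c * G x) 0 PI = RInt F 0 PI + c * RInt G 0 PI.
Proof.
  intros. rewrite RInt_add; auto. rewrite RInt_scl; auto.
  apply (ex_RInt_scal (V:=R_CompleteNormedModule) G 0 PI c); auto.
Qed.

Lemma quad_disc A B C : 0 <= C -> (forall s, 0 <= A + 2 * s * B + s ^ 2 * C) -> B ^ 2 <= A * C.
Proof.
  intros HC H. destruct (Rle_lt_or_eq_dec 0 C HC) as [Cp|C0].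
  - specialize (H (- B / C)).
    replace (A + 2 * (- B / C) * B + (- B / C) ^ 2 * C) with ((A * C - B ^ 2) / C) in H by (field; lra).
    assert (0 <= (A * C - B ^ 2)). { apply Rmult_le_reg_r with (/ C).
      apply Rinv_0_lt_compat; auto. rewrite Rmult_0_l. exact H. }
    lra.
  - subst C. destruct (Req_dec B 0) as [->|Bn]; [nra|].
    specialize (H (- (A + 1) / (2 * B))).
    replace (A + 2 * (- (A + 1) / (2 * B)) * B + (- (A + 1) / (2 * B)) ^ 2 * 0) with (-1) in H
      by (field; auto). lra.
Qed.

Lemma RInt_sq_nonneg h : cont01 h -> 0 <= RInt (fun x => h x ^ 2) 0 PI.
Proof.
  intros H. pose proof PI_RGT_0. apply RInt_ge_0; [lra| |].
  - apply cont01_ex_RInt. apply cont01_pow2; auto.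
  - intros; apply pow2_ge_0.
Qed.

Lemma CS f g : cont01 f -> cont01 g ->
  (RInt (fun x => f x * g x) 0 PI) ^ 2 <= RInt (fun x => f x ^ 2) 0 PI * RInt (fun x => g x ^ 2) 0 PI.
Proof.
  intros Hf Hg. apply quad_disc; [apply RInt_sq_nonneg; auto|].
  intros s.
  assert (E : RInt (fun x => (f x + s * g x) ^ 2) 0 PI =
     RInt (fun x => f x ^ 2) 0 PI + 2 * s * RInt (fun x => f x * g x) 0 PI + s ^ 2 * RInt (fun x => g x ^ 2) 0 PI).
  { rewrite (RInt_ext _ (fun x => (fun x => f x ^ 2 + (2 * s) * (f x * g x)) x + s ^ 2 * g x ^ 2)).
    2: intros x _; simpl; ring.
    rewrite RInt_lin. rewrite RInt_lin. reflexivity.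
    all: apply cont01_ex_RInt; c01; auto. }
  rewrite <- E. apply RInt_sq_nonneg. c01; auto.
Qed.

Ltac rring := match goal with |- ?a = ?b => change (@eq R a b) end; ring.

Lemma young2 k g w : 0 < k -> 2 * (g * w) <= k * w ^ 2 + / k * g ^ 2.
Proof.
  intros Hk. apply Rmult_le_reg_l with k; auto.
  assert (k * (k * w ^ 2 + / k * g ^ 2) = k * k * w ^ 2 + g ^ 2) by (field; lra).
  rewrite H. pose proof (pow2_ge_0 (k * w - g)). nra.
Qed.

Lemma int_facts (W Wx Wxx Wt : R -> R -> R) t al :
  J W -> J Wx -> J Wxx -> J Wt ->
  (forall t x, is_derive (W t) x (Wx t x)) -> (forall t x, is_derive (Wx t) x (Wxx t x)) ->
  (forall t, W t 0 = 0 /\ W t PI = 0) ->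
  let N := RInt (fun x => W t x ^ 2) 0 PI in
  let P := RInt (fun x => Wx t x ^ 2) 0 PI in
  let X := RInt (fun x => Wt t x * W t x) 0 PI in
  let Y := RInt (fun x => Wt t x * Wxx t x) 0 PI in
  let Gi := RInt (fun x => (Wt t x - al * Wxx t x) ^ 2) 0 PI in
  (forall k, 0 < k -> 2 * X <= -2 * al * P + k * N + Gi / k) /\
  (-2 * al * P - N - Gi <= 2 * X) /\
  (0 < al -> 0 < N -> 0 <= Y + (P / N) * X + Gi / (4 * al)).
Proof.
  intros JW JWx JWxx JWt Dx Dxx BC N P X Y Gi.
  pose proof PI_RGT_0 as HPI.
  assert (IB : RInt (fun x => W t x * Wxx t x) 0 PI = - P).
  { unfold P. rewrite (RInt_ext (fun x => Wx t x ^ 2) (fun x => Wx t x * Wx t x)).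
    2: intros x _; simpl; ring.
    rewrite (ibp (W t) (Wx t) (Wx t) (Wxx t)); auto; try c01; try apply BC. symmetry; apply Ropp_involutive. }
  assert (XE : X = al * RInt (fun x => W t x * Wxx t x) 0 PI +
                   RInt (fun x => (Wt t x - al * Wxx t x) * W t x) 0 PI).
  { unfold X. rewrite (RInt_ext (fun x => Wt t x * W t x)
       (fun x => (Wt t x - al * Wxx t x) * W t x + al * (W t x * Wxx t x))).
    2: intros x _; simpl; ring.
    rewrite RInt_lin. rring. all: apply cont01_ex_RInt; c01. }
  set (GW := RInt (fun x => (Wt t x - al * Wxx t x) * W t x) 0 PI) in XE.
  assert (GWs : RInt (fun x => 2 * ((Wt t x - al * Wxx t x) * W t x)) 0 PI = 2 * GW).
  { unfold GW. apply RInt_scl. apply cont01_ex_RInt; c01. }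
  split; [|split].
  - intros k Hk.
    assert (2 * GW <= k * N + Gi / k).
    { rewrite <- GWs.
      assert (E : k * N + Gi / k = RInt (fun x => k * W t x ^ 2 + / k * (Wt t x - al * Wxx t x) ^ 2) 0 PI).
      { rewrite (RInt_lin (fun x => k * W t x ^ 2)). rewrite RInt_scl. unfold N, Gi, Rdiv. rring.
        all: apply cont01_ex_RInt; c01. }
      rewrite E. apply RInt_le; [lra| | |].
      - apply cont01_ex_RInt; c01.
      - apply cont01_ex_RInt; c01.
      - intros x _. apply young2; auto. }
    rewrite XE, IB. lra.
  - assert (- N - Gi <= 2 * GW).
    { rewrite <- GWs.
      assert (E : - N - Gi = RInt (fun x => -1 * W t x ^ 2 + -1 * (Wt t x - al * Wxx t x) ^ 2) 0 PI).
      { rewrite (RInt_lin (fun x => -1 * W t x ^ 2)). rewrite RInt_scl. unfold N, Gi. rring.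
        all: apply cont01_ex_RInt; c01. }
      rewrite E. apply RInt_le; [lra| | |].
      - apply cont01_ex_RInt; c01.
      - apply cont01_ex_RInt; c01.
      - intros x _. pose proof (pow2_ge_0 (Wt t x - al * Wxx t x + W t x)). nra. }
    rewrite XE, IB. lra.
  - intros Hal HN. set (L := P / N).
    assert (Z : 0 <= RInt (fun x => Wt t x * Wxx t x + L * (Wt t x * W t x) + (al * L) * (W t x * Wxx t x)
                    + (al * L ^ 2) * W t x ^ 2 + / (4 * al) * (Wt t x - al * Wxx t x) ^ 2) 0 PI).
    { apply RInt_ge_0; [lra| apply cont01_ex_RInt; c01 |].
      intros x _. cbv beta.
      assert (E : forall w wxx wt, wt * wxx + L * (wt * w) + al * L * (w * wxx) + al * L ^ 2 * w ^ 2
                 + / (4 * al) * (wt - al * wxx) ^ 2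
                = / (4 * al) * (2 * al * (- wxx - L * w) - (wt - al * wxx)) ^ 2).
      { intros. field. lra. }
      rewrite E. apply Rmult_le_pos; [left; apply Rinv_0_lt_compat; lra| apply pow2_ge_0]. }
    rewrite RInt_lin, RInt_lin, RInt_lin, RInt_lin in Z.
    2-9: apply cont01_ex_RInt; c01.
    fold Y X Gi in Z. rewrite IB in Z. fold N in Z.
    assert (LN : L * N = P) by (unfold L; field; lra).
    assert (E2 : al * L ^ 2 * N = al * L * P) by (rewrite <- LN; ring).
    unfold Rdiv. fold L. rewrite Rmult_comm with (r1 := / (4 * al)) in Z. nra.
Qed.

Lemma RInt_bound_sq h B : cont01 h -> (forall x, 0 <= x <= PI -> Rabs (h x) <= B) ->
  RInt (fun x => h x ^ 2) 0 PI <= PI * B ^ 2.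
Proof.
  intros Hh HB. pose proof PI_RGT_0.
  replace (PI * B ^ 2) with (RInt (fun _ => B ^ 2) 0 PI).
  2: { rewrite (RInt_const (V:=R_CompleteNormedModule)). unfold scal; simpl; unfold mult; simpl. ring. }
  apply RInt_le; [lra| apply cont01_ex_RInt; c01 | apply cont01_ex_RInt; c01 |].
  intros x Hx. specialize (HB x ltac:(lra)). pose proof (Rabs_pos (h x)).
  rewrite <- (pow2_abs (h x)). apply pow_incr. lra.
Qed.

Lemma f_lip f R0 : hyp_f f -> 0 <= R0 -> exists Kf, 0 <= Kf /\
  forall y1 y2, Rabs y1 <= R0 -> Rabs y2 <= R0 -> Rabs (f y1 - f y2) <= Kf * Rabs (y1 - y2).
Proof.
  intros [[Hd1 [Hd2 _]] _] HR.
  assert (Cd : forall y, continuity_pt (Derive f) y).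
  { intros y. apply (is_derive_cont _ y (Derive (Derive f) y)). apply Derive_correct, Hd2. }
  destruct (continuity_ab_maj (fun y => Rabs (Derive f y)) (- R0) R0) as [ym [Hym _]]; [lra| |].
  { intros c _. apply (continuity_pt_comp (Derive f) Rabs); auto. apply Rcontinuity_abs. }
  exists (Rabs (Derive f ym)). split; [apply Rabs_pos|].
  intros y1 y2 H1 H2.
  destruct (MVT_gen f y2 y1 (Derive f)) as [c [Hc E]].
  - intros x _. apply Derive_correct, Hd1.
  - intros x _. apply (is_derive_cont _ x (Derive f x)), Derive_correct, Hd1.
  - rewrite E, Rabs_mult. apply Rmult_le_compat_r; [apply Rabs_pos|].
    apply Hym. revert H1 H2 Hc. unfold Rmin, Rmax, Rabs; repeat destruct Rle_dec; repeat destruct Rcase_abs; lra.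
Qed.

Lemma sq_sum_le A B : (A + B) ^ 2 <= 2 * A ^ 2 + 2 * B ^ 2.
Proof. pose proof (pow2_ge_0 (A - B)). nra. Qed.

Lemma abs_sq_le x y : Rabs x <= y -> x ^ 2 <= y ^ 2.
Proof. intros H. pose proof (Rabs_pos x). rewrite <- (pow2_abs x). apply pow_incr. lra. Qed.

Lemma Gbound a f lambda m M u v T0 T1 :
  hyp_a a m M -> hyp_f f ->
  global_solution a f lambda u -> global_solution a f lambda v ->
  exists C1 C2, 0 <= C1 /\ 0 <= C2 /\ forall t, T0 <= t <= T1 ->
    RInt (fun x => (Wtf u v t x - a (grad_norm2 (u t)) * Wxxf u v t x) ^ 2) 0 PI <=
    C1 * RInt (fun x => Wxf u v t x ^ 2) 0 PI + C2 * RInt (fun x => Wf u v t x ^ 2) 0 PI.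
Proof.
  intros Ha Hf Su Sv.
  pose proof PI_RGT_0 as HPI.
  pose proof (sol_good _ _ _ _ Su) as Gu. pose proof (sol_good _ _ _ _ Sv) as Gv.
  destruct Gu as [Ju [JuX [JuXX [JuT [Dux [Duxx [Dut BCu]]]]]]].
  destruct Gv as [Jv [JvX [JvXX [JvT [Dvx [Dvxx [Dvt BCv]]]]]]].
  destruct (J_bound u T0 T1 Ju) as [Bu HBu].
  destruct (J_bound v T0 T1 Jv) as [Bv HBv].
  destruct (J_bound (uXX v) T0 T1 JvXX) as [Bvxx HBvxx].
  destruct (J_bound (fun t x => uX u t x + uX v t x) T0 T1) as [Bq HBq]. { apply J_plus; auto. }
  set (R0 := Rmax (Rabs Bu) (Rabs Bv)).
  assert (HR0 : 0 <= R0) by (unfold R0; eapply Rle_trans; [apply Rabs_pos| apply Rmax_l]).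
  destruct (f_lip f R0 Hf HR0) as [Kf [HKf Hflip]].
  destruct Ha as [_ [_ [[L [HL HLip]] [Hm Hab]]]].
  set (V := PI * Bvxx ^ 2). set (Q := PI * Bq ^ 2).
  assert (HV : 0 <= V) by (unfold V; apply Rmult_le_pos; [lra| apply pow2_ge_0]).
  assert (HQ : 0 <= Q) by (unfold Q; apply Rmult_le_pos; [lra| apply pow2_ge_0]).
  exists (2 * L ^ 2 * V * Q), (2 * lambda ^ 2 * Kf ^ 2).
  split. { pose proof (pow2_ge_0 L). assert (0 <= 2 * L ^ 2) by lra.
    apply Rmult_le_pos; auto. apply Rmult_le_pos; auto. }
  split. { pose proof (pow2_ge_0 lambda); pose proof (pow2_ge_0 Kf). assert (0 <= 2 * lambda ^ 2) by lra.
    apply Rmult_le_pos; auto. }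
  intros t Ht.
  set (p := grad_norm2 (u t)). set (q := grad_norm2 (v t)).
  assert (Hp : 0 <= p) by (apply (RInt_sq_nonneg (uX u t)); c01).
  assert (Hq : 0 <= q) by (apply (RInt_sq_nonneg (uX v t)); c01).
  set (c := a p - a q).
  set (P := RInt (fun x => Wxf u v t x ^ 2) 0 PI).
  set (N := RInt (fun x => Wf u v t x ^ 2) 0 PI).
  assert (HP : 0 <= P) by (apply RInt_sq_nonneg; unfold Wxf; c01).
  assert (HN : 0 <= N) by (apply RInt_sq_nonneg; unfold Wf; c01).
  assert (Epq : p - q = RInt (fun x => Wxf u v t x * (uX u t x + uX v t x)) 0 PI).
  { unfold p, q, grad_norm2. rewrite <- RInt_sub;
      [| apply cont01_ex_RInt; exact (cont01_pow2 _ (J_cont01 (uX u) t JuX))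
       | apply cont01_ex_RInt; exact (cont01_pow2 _ (J_cont01 (uX v) t JvX))].
    apply RInt_ext. intros x _. unfold Wxf, uX. simpl. ring. }
  assert (Hpq : (p - q) ^ 2 <= P * Q).
  { rewrite Epq. eapply Rle_trans; [apply CS; unfold Wxf; c01|].
    apply Rmult_le_compat_l; auto.
    apply RInt_bound_sq; [c01|]. intros x Hx. apply HBq; auto. }
  assert (Hc : c ^ 2 <= L ^ 2 * (p - q) ^ 2).
  { assert (Rabs c <= L * Rabs (p - q)) by (apply HLip; auto).
    replace (L ^ 2 * (p - q) ^ 2) with ((L * Rabs (p - q)) ^ 2) by (rewrite Rpow_mult_distr, pow2_abs; ring).
    apply abs_sq_le; auto. }
  assert (HvV : RInt (fun x => uXX v t x ^ 2) 0 PI <= V).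
  { apply RInt_bound_sq; [c01|]. intros; apply HBvxx; auto. }
  assert (Pw : forall x, 0 < x < PI ->
     (Wtf u v t x - a p * Wxxf u v t x) ^ 2 <= (2 * c ^ 2) * uXX v t x ^ 2 + (2 * lambda ^ 2 * Kf ^ 2) * Wf u v t x ^ 2).
  { intros x Hx.
    destruct Su as [_ [_ [_ [_ [_ [_ [_ PDEu]]]]]]]. destruct Sv as [_ [_ [_ [_ [_ [_ [_ PDEv]]]]]]].
    assert (E : Wtf u v t x - a p * Wxxf u v t x = c * uXX v t x + lambda * (f (u t x) - f (v t x))).
    { unfold Wtf, Wxxf, uT, uXX, c. rewrite (PDEu t x Hx), (PDEv t x Hx). fold p q. ring. }
    rewrite E. eapply Rle_trans; [apply sq_sum_le|].
    assert (Fl : Rabs (f (u t x) - f (v t x)) <= Kf * Rabs (Wf u v t x)).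
    { apply Hflip.
      - eapply Rle_trans; [apply HBu; lra|]. unfold R0. eapply Rle_trans; [apply Rle_abs| apply Rmax_l].
      - eapply Rle_trans; [apply HBv; lra|]. unfold R0. eapply Rle_trans; [apply Rle_abs| apply Rmax_r]. }
    apply abs_sq_le in Fl.
    rewrite Rpow_mult_distr, pow2_abs in Fl.
    rewrite !Rpow_mult_distr. pose proof (pow2_ge_0 lambda). nra. }
  assert (HG : RInt (fun x => (Wtf u v t x - a p * Wxxf u v t x) ^ 2) 0 PI <=
      (2 * c ^ 2) * RInt (fun x => uXX v t x ^ 2) 0 PI + (2 * lambda ^ 2 * Kf ^ 2) * N).
  { unfold N. rewrite <- RInt_scl; [| apply cont01_ex_RInt; c01].
    rewrite <- RInt_lin; [| apply cont01_ex_RInt; c01 | apply cont01_ex_RInt; unfold Wf; c01].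
    apply RInt_le; [lra| apply cont01_ex_RInt; unfold Wtf, Wxxf; c01 | apply cont01_ex_RInt; unfold Wf; c01 |].
    exact Pw. }
  assert (c ^ 2 * RInt (fun x => uXX v t x ^ 2) 0 PI <= c ^ 2 * V).
  { apply Rmult_le_compat_l; auto. apply pow2_ge_0. }
  assert (L ^ 2 * (p - q) ^ 2 * V <= L ^ 2 * (P * Q) * V).
  { apply Rmult_le_compat_r; auto. apply Rmult_le_compat_l; auto. apply pow2_ge_0. }
  assert (c ^ 2 * V <= L ^ 2 * (p - q) ^ 2 * V) by (apply Rmult_le_compat_r; auto).
  fold p. nra.
Qed.

Definition Nf (u v : R -> R -> R) t := RInt (fun x => Wf u v t x ^ 2) 0 PI.

Lemma core a f lambda m M u v T0 T1 :
  hyp_a a m M -> hyp_f f ->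
  global_solution a f lambda u -> global_solution a f lambda v -> T0 <= T1 ->
  (Nf u v T0 = 0 -> Nf u v T1 = 0) /\ (Nf u v T1 = 0 -> Nf u v T0 = 0).
Proof.
  intros Ha Hf Su Sv HT.
  destruct (Gbound a f lambda m M u v T0 T1 Ha Hf Su Sv) as [C1 [C2 [HC1 [HC2 HG]]]].
  pose proof (sol_good _ _ _ _ Su) as Gu. pose proof (sol_good _ _ _ _ Sv) as Gv.
  assert (JuX : J (uX u)) by (destruct Gu as [_ [? _]]; auto).
  destruct (good_W u v Gu Gv) as [JW [JWx [JWxx [JWt [Dx [Dxx [Dt BC]]]]]]].
  destruct Ha as [_ [_ [_ [Hm Hab]]]].
  set (N := fun t => RInt (fun x => Wf u v t x ^ 2) 0 PI).
  set (P := fun t => RInt (fun x => Wxf u v t x ^ 2) 0 PI).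
  set (X := fun t => RInt (fun x => Wtf u v t x * Wf u v t x) 0 PI).
  set (Y := fun t => RInt (fun x => Wtf u v t x * Wxxf u v t x) 0 PI).
  set (al := fun t => a (grad_norm2 (u t))).
  set (Gi := fun t => RInt (fun x => (Wtf u v t x - al t * Wxxf u v t x) ^ 2) 0 PI).
  assert (DN : forall t, is_derive N t (2 * X t)) by (intros; apply (derivN (Wf u v) (Wtf u v)); auto).
  assert (DP : forall t, is_derive P t (-2 * Y t)) by (intros; apply (derivP (Wf u v) (Wxf u v) (Wxxf u v) (Wtf u v)); auto).
  assert (Fa : forall t, 0 <= N t /\ 0 <= P t /\ m <= al t /\ al t <= M /\ 0 <= Gi t).
  { intros t. split; [apply RInt_sq_nonneg; c01|]. split; [apply RInt_sq_nonneg; c01|].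
    assert (0 <= grad_norm2 (u t)) by (apply (RInt_sq_nonneg (uX u t)); c01).
    destruct (Hab _ H). split; [auto|]. split; [auto|]. apply RInt_sq_nonneg; c01. }
  unfold Nf. fold (N T0) (N T1).
  split.
  - intros H0. apply (fwd_abs N X P Gi al m C1 C2 T0 T1); auto.
    intros t Ht. destruct (Fa t) as [A1 [A2 [A3 [A4 A5]]]].
    destruct (int_facts (Wf u v) (Wxf u v) (Wxxf u v) (Wtf u v) t (al t) JW JWx JWxx JWt Dx Dxx BC)
      as [B1 [B2 B3]].
    repeat split; auto. apply HG; auto.
  - intros H1. apply (bwd_abs N X P Y Gi al m M C1 C2 T0 T1); auto.
    intros t Ht. destruct (Fa t) as [A1 [A2 [A3 [A4 A5]]]].
    destruct (int_facts (Wf u v) (Wxf u v) (Wxxf u v) (Wtf u v) t (al t) JW JWx JWxx JWt Dx Dxx BC)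
      as [B1 [B2 B3]].
    repeat split; auto. apply HG; auto. intros HN. apply B3; auto. lra.
Qed.

Lemma jcont_shift g c : jcont g -> jcont (fun t x => g (t + c) x).
Proof.
  intros H t x Hx eps He. destruct (H (t + c) x Hx eps He) as [d [Hd K]].
  exists d; split; auto. intros t' x' Hx' Ht' Hxx'. apply K; auto.
  replace (t' + c - (t + c)) with (t' - t) by ring. auto.
Qed.

Lemma jcont_ext_in g h : (forall t x, 0 <= x <= PI -> g t x = h t x) -> jcont g -> jcont h.
Proof.
  intros E H t x Hx eps He. destruct (H t x Hx eps He) as [d [Hd K]].
  exists d; split; auto. intros t' x' Hx' Ht' Hxx'. rewrite <- !E; auto.
Qed.

Lemma shift_sol a f lambda u c : global_solution a f lambda u ->
  global_solution a f lambda (fun t => u (t + c)).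
Proof.
  intros [H1 [H2 [H3 [H4 [H5 [H6 [H7 H8]]]]]]].
  assert (DS : forall t x, 0 <= x <= PI ->
     is_derive (fun s => u (s + c) x) t (Derive (fun s => u s x) (t + c))).
  { intros t x Hx.
    assert (A : is_derive (fun s => s + c) t 1).
    { apply is_derive_Reals. replace 1 with (1 + 0) by ring.
      pose proof (derivable_pt_lim_plus _ _ t _ _ (derivable_pt_lim_id t) (derivable_pt_lim_const c t)) as Hp.
      unfold plus_fct, id, fct_cte in Hp. exact Hp. }
    assert (B := is_derive_comp (fun s => u s x) (fun s => s + c) t _ 1
                   (Derive_correct _ _ (H2 (t + c) x Hx)) A).
    unfold scal in B; simpl in B; unfold mult in B; simpl in B. rewrite Rmult_1_l in B. exact B. }
  assert (DE : forall t x, 0 <= x <= PI ->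
     Derive (fun s => u (s + c) x) t = Derive (fun s => u s x) (t + c)).
  { intros; apply is_derive_unique, DS; auto. }
  split; [intros t x; apply H1|].
  split; [intros t x Hx; eexists; apply DS; auto|].
  split; [apply (jcont_shift u c H3)|].
  split; [apply (jcont_shift (fun t x => Derive (u t) x) c H4)|].
  split; [apply (jcont_shift (fun t x => Derive_n (u t) 2 x) c H5)|].
  split.
  { apply (jcont_ext_in (fun t x => Derive (fun s => u s x) (t + c))).
    - intros; symmetry; apply DE; auto.
    - apply (jcont_shift (fun t x => Derive (fun s => u s x) t) c H6). }
  split; [intros t; apply H7|].
  intros t x Hx. rewrite DE by lra. apply H8; auto.
Qed.

Lemma N0_same u v t : good u -> good v -> Nf u v t = 0 -> same_state (u t) (v t).
Proof.
  intros Gu Gv HN x0 Hx0. pose proof PI_RGT_0 as HPI.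
  destruct (good_W u v Gu Gv) as [JW _].
  apply NNPP. intros Hne.
  set (h := fun y => Wf u v t y ^ 2).
  assert (Ch : cont01 h) by (unfold h; c01).
  set (hc := fun y => h (cl y)).
  assert (Hx0p : 0 < h x0).
  { unfold h, Wf. assert (u t x0 - v t x0 <> 0) by (intro; apply Hne; lra).
    apply pow2_gt_0; auto. }
  destruct (cont_pt_eps hc x0 (cont_pt_of _ _ (Ch x0)) (h x0 / 2)) as [d [Hd K]]; [lra|].
  assert (Hhc0 : hc x0 = h x0) by (unfold hc; rewrite cl_id; auto).
  set (al := Rmax 0 (x0 - d / 2)). set (be := Rmin PI (x0 + d / 2)).
  assert (Hab : 0 <= al < be /\ be <= PI).
  { unfold al, be, Rmax, Rmin; repeat destruct Rle_dec; lra. }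
  assert (Ex : forall a b, ex_RInt hc a b).
  { intros a b. apply (ex_RInt_continuous (V:=R_CompleteNormedModule)). intros; apply Ch. }
  assert (E : Nf u v t = RInt hc 0 al + RInt hc al be + RInt hc be PI).
  { unfold Nf. rewrite (RInt_ext _ hc).
    2: { intros x Hx. rewrite Rmin_left, Rmax_right in Hx by lra. unfold hc, h. rewrite cl_id; auto; lra. }
    rewrite <- (RInt_Chasles (V:=R_CompleteNormedModule) hc 0 be PI); auto.
    rewrite <- (RInt_Chasles (V:=R_CompleteNormedModule) hc 0 al be); auto.
  }
  assert (P1 : 0 <= RInt hc 0 al).
  { apply RInt_ge_0; auto; try lra. intros; unfold hc, h; apply pow2_ge_0. }
  assert (P3 : 0 <= RInt hc be PI).
  { apply RInt_ge_0; auto; try lra. intros; unfold hc, h; apply pow2_ge_0. }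
  assert (P2 : (be - al) * (h x0 / 2) <= RInt hc al be).
  { replace ((be - al) * (h x0 / 2)) with (RInt (fun _ => h x0 / 2) al be).
    2: { rewrite (RInt_const (V:=R_CompleteNormedModule)). unfold scal; simpl; unfold mult; simpl. ring. }
    apply RInt_le; auto; try lra.
    - apply (ex_RInt_const (V:=R_CompleteNormedModule)).
    - intros x Hx. assert (Rabs (hc x - hc x0) < h x0 / 2).
      { apply K. unfold al, be, Rmax, Rmin in Hx; repeat destruct Rle_dec in Hx;
        unfold Rabs; destruct Rcase_abs; lra. }
      rewrite Hhc0 in H. revert H. unfold Rabs; destruct Rcase_abs; lra. }
  assert (0 < (be - al) * (h x0 / 2)) by (apply Rmult_lt_0_compat; lra).
  lra.
Qed.

Lemma same_N0 u v t : same_state (u t) (v t) -> Nf u v t = 0.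
Proof.
  intros H. pose proof PI_RGT_0. unfold Nf.
  rewrite (RInt_ext _ (fun _ => 0)).
  - rewrite (RInt_const (V:=R_CompleteNormedModule)). unfold scal; simpl; unfold mult; simpl. ring.
  - intros x Hx. rewrite Rmin_left, Rmax_right in Hx by lra. unfold Wf. rewrite H by lra. simpl. ring.
Qed.

Theorem proposition2p2 (lambda m M : R) (a f : R -> R) (u v : R -> R -> R) :
  0 < lambda -> hyp_a a m M -> hyp_f f ->
  global_solution a f lambda u -> global_solution a f lambda v ->
  (exists s t, same_state (u s) (v t)) ->
  (forall s, exists t, same_state (u s) (v t)) /\
  (forall t, exists s, same_state (v t) (u s)).
Proof.
  intros Hl Ha Hf Su Sv [s0 [t0 Hst]].
  set (c := t0 - s0).
  set (v' := fun t => v (t + c)).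
  assert (Sv' : global_solution a f lambda v') by (apply shift_sol; auto).
  assert (Z0 : Nf u v' s0 = 0).
  { apply same_N0. unfold v', c. replace (s0 + (t0 - s0)) with t0 by ring. exact Hst. }
  assert (All : forall t, same_state (u t) (v' t)).
  { intros t. apply N0_same; [apply (sol_good _ _ _ _ Su)| apply (sol_good _ _ _ _ Sv')|].
    destruct (Rle_lt_dec s0 t) as [Hle|Hlt].
    - apply (proj1 (core a f lambda m M u v' s0 t Ha Hf Su Sv' Hle)); auto.
    - apply (proj2 (core a f lambda m M u v' t s0 Ha Hf Su Sv' ltac:(lra))); auto. }
  split.
  - intros s. exists (s + c). apply (All s).
  - intros t. exists (t - c). intros x Hx. symmetry.
    pose proof (All (t - c) x Hx) as K. unfold v' in K.
    replace (t - c + c) with t in K by ring. exact K.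
Qed.
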